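(* Let $G$ be a finite, simple, connected graph. If $G$ contains an isometric cycle $C$ of length $n\ge 3$, then $\sigma(G)\ge \lceil n/3\rceil$.
   Context: A cycle $C$ in $G$ is isometric if $d_C(u,v)=d_G(u,v)$ for all vertices $u,v$ of $C$, where $d_C$, $d_G$ are graph distances in $C$ and in $G$. The stretch of $G$ is $\sigma(G)=\min_T\max_{uv\in E(G)} d_T(u,v)$, the minimum over all spanning trees $T$ of $G$. *)

(* Defs.v *)
From mathcomp Require Import all_boot.
Set Implicit Arguments. Unset Strict Implicit. Unset Printing Implicit Defensive.

Section Graphs.
Variable T : finType.

Definition simple_graph (e : rel T) : Prop :=
  symmetric e /\ irreflexive e.

Definition connected_graph (e : rel T) : Prop :=
  forall x y : T, connect e x y.

Definition walk_of_len (e : rel T) (x y : T) (k : nat) : bool :=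
  [exists p : k.-tuple T, path e x p && (last x p == y)].

(* Graph distance: the least k such that there is an x-y walk of length k
   (equals #|T| if y is unreachable from x; a shortest walk in a graph has
   length < #|T|). *)
Definition dist (e : rel T) (x y : T) : nat :=
  find (walk_of_len e x y) (iota 0 #|T|).

Definition cycle_rel (c : seq T) : rel T :=
  fun x y => [&& x \in c, y \in c & (next c x == y) || (next c y == x)].

Definition is_cycle (e : rel T) (c : seq T) : bool :=
  [&& 3 <= size c, uniq c & cycle e c].

Definition isometric_cycle (e : rel T) (c : seq T) : Prop :=
  is_cycle e c /\
  forall u v, u \in c -> v \in c -> dist (cycle_rel c) u v = dist e u v.

Definition rel_of (t : {set T * T}) : rel T := fun x y => (x, y) \in t.

(* Acyclic: no cycle (distinct vertices, length >= 3); cycles in a graph on T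
   have length at most #|T|. *)
Definition acyclicb (r : rel T) : bool :=
  [forall k : 'I_#|T|.+1, forall c : k.-tuple T, ~~ is_cycle r c].

Definition spanning_tree (e : rel T) (t : {set T * T}) : bool :=
  [&& [forall p in t, e p.1 p.2],
      [forall p in t, (p.2, p.1) \in t],
      [forall x, forall y, connect (rel_of t) x y] &
      acyclicb (rel_of t)].

(* Stretch: min over spanning trees of the max over edges uv of d_T(u,v).
   (Default #|T| if no spanning tree exists, which never happens for
   connected graphs.) *)
Definition stretch (e : rel T) : nat :=
  \big[minn/#|T|]_(t : {set T * T} | spanning_tree e t)
     \max_(p : T * T | e p.1 p.2) dist (rel_of t) p.1 p.2.

End Graphs.

(* Main.v *)
Require Import Defs.
From mathcomp Require Import all_boot zify.

Set Implicit Arguments. Unset Strict Implicit. Unset Printing Implicit Defensive.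

Section Dist.
Variable T : finType.
Implicit Types (r : rel T) (x y z : T).

Lemma walkP r x y k :
  reflect (exists p : seq T, [/\ size p = k, path r x p & last x p = y])
          (walk_of_len r x y k).
Proof.
apply: (iffP existsP) => [[p /andP[Hp /eqP Hl]] | [p [Hs Hp Hl]]].
  by exists (val p); rewrite size_tuple.
have Hs' : size p == k by rewrite Hs.
by exists (Tuple Hs'); rewrite /= Hp Hl eqxx.
Qed.

Lemma dist_le r x y p : path r x p -> last x p = y -> dist r x y <= size p.
Proof.
move=> Hp Hl; rewrite /dist.
case: (ltnP (size p) #|T|) => Hs; last first.
  by apply: leq_trans (find_size _ _) _; rewrite size_iota.
rewrite leqNgt; apply/negP => Hlt.
have := before_find 0 Hlt; rewrite nth_iota // add0n.
by move/negbT/negP; apply; apply/walkP; exists p.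
Qed.

Lemma dist_lt_path r x y : dist r x y < #|T| ->
  exists p, [/\ size p = dist r x y, path r x p & last x p = y].
Proof.
move=> H; have Hh : has (walk_of_len r x y) (iota 0 #|T|).
  by rewrite has_find size_iota.
have := nth_find 0 Hh; rewrite nth_iota; last by [].
by rewrite add0n => /walkP.
Qed.

Lemma dist_conn_lt r x y : connect r x y -> dist r x y < #|T|.
Proof.
case/connectP=> p Hp ->; case/shortenP: Hp => p' Hp' Hu _.
apply: leq_ltn_trans (dist_le Hp' erefl) _.
have /card_uniqP H := Hu; rewrite -ltnS; move: H => /= <-; exact: max_card.
Qed.

Lemma dist_path r x y : connect r x y ->
  exists p, [/\ size p = dist r x y, path r x p & last x p = y].
Proof. by move=> /dist_conn_lt; apply: dist_lt_path. Qed.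

Lemma dist_tri r x y z : connect r x y -> connect r y z ->
  dist r x z <= dist r x y + dist r y z.
Proof.
move=> /dist_path [p [Hs Hp Hl]] /dist_path [q [Hs' Hq Hl']].
rewrite -Hs -Hs' -size_cat; apply: dist_le; first by rewrite cat_path Hp Hl Hq.
by rewrite last_cat Hl.
Qed.

Lemma dist_sub r r' x y : subrel r r' -> connect r x y -> dist r' x y <= dist r x y.
Proof.
move=> Hsub /dist_path [p [<- Hp Hl]]; exact: dist_le (sub_path Hsub Hp) Hl.
Qed.

Lemma dist0 r x : dist r x x = 0.
Proof. by apply/eqP; rewrite -leqn0; apply: (@dist_le r x x [::]). Qed.

Lemma dist_sym_le r x y : symmetric r -> connect r x y -> dist r y x <= dist r x y.
Proof.
move=> Hs /dist_path [p [<- Hp Hl]].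
have Hp' : path r y (rev (belast x p)).
  rewrite -Hl rev_path; apply: sub_path Hp => a b; by rewrite Hs.
rewrite -(size_belast x p) -size_rev; apply: dist_le Hp' _.
rewrite -Hl; case: p {Hp Hl} => //= a p.
by rewrite rev_cons last_rcons.
Qed.

Lemma dist_sym r x y : symmetric r -> connect r x y -> dist r x y = dist r y x.
Proof.
move=> Hs Hc; apply/eqP; rewrite eqn_leq (dist_sym_le Hs Hc) andbT.
by apply: dist_sym_le => //; rewrite (sym_connect_sym Hs).
Qed.
End Dist.

Section Cyc.
Variable T : finType.
Variables (c : seq T) (x0 : T).
Hypothesis Uc : uniq c.
Hypothesis Hn : 0 < size c.
Local Notation n := (size c).
Definition cv m := nth x0 c (m %% n).

Lemma cvE a b : (cv a == cv b) = (a %% n == b %% n).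
Proof. by rewrite /cv nth_uniq // ltn_pmod. Qed.

Lemma cvD a b d : cv a = cv b -> cv (a + d) = cv (b + d).
Proof.
move/eqP; rewrite cvE => /eqP H; apply/eqP; rewrite cvE.
by rewrite -modnDml H modnDml.
Qed.

Lemma cv_in m : cv m \in c.
Proof. by rewrite /cv mem_nth // ltn_pmod. Qed.

Lemma cv_index x : x \in c -> cv (index x c) = x.
Proof. by move=> H; rewrite /cv modn_small ?index_mem // nth_index. Qed.

Lemma next_cv m : next c (cv m) = cv m.+1.
Proof.
have: forall s, uniq s -> 0 < size s ->
   next s (nth x0 s (m %% size s)) = nth x0 s (m.+1 %% size s).
  move=> [//|y s'] U _.
  have Hl : m %% (size s').+1 < (size s').+1 by rewrite ltn_pmod.
  rewrite next_nth mem_nth //.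
  have -> : index (nth x0 (y :: s') (m %% (size s').+1)) (y :: s') = m %% (size s').+1 by rewrite index_uniq.
  rewrite /= -[m.+1]addn1 -modnDml addn1.
  move: Hl; set q := m %% _ => Hl.
  case: (ltnP q.+1 (size s').+1) => H.
    by rewrite (modn_small H) /=; apply: set_nth_default.
  have E : q = size s' by apply/eqP; rewrite eqn_leq -ltnS Hl; rewrite ltnS in H.
  by rewrite E modnn /= nth_default.
by move=> /(_ c Uc Hn).
Qed.

Lemma cv_mod m : cv (m %% n) = cv m.
Proof. by rewrite /cv modn_mod. Qed.

Lemma cvn m : cv (m + n) = cv m.
Proof. by rewrite /cv modnDr. Qed.

Lemma cvK a b d : cv (a + d) = cv (b + d) -> cv a = cv b.
Proof. by move/eqP; rewrite cvE eqn_modDr -cvE => /eqP. Qed.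

Lemma cyc_step y z j : y = cv j -> cycle_rel c y z ->
  z = cv (j + 1) \/ exists j', z = cv j' /\ cv (j' + 1) = cv j.
Proof.
move=> -> /and3P [_ Hz /orP [/eqP <- | /eqP H]]; first by left; rewrite next_cv addn1.
right; exists (index z c); rewrite cv_index //; split=> //.
by rewrite addn1 -next_cv cv_index.
Qed.

Lemma cyc_walk i p : path (cycle_rel c) (cv i) p ->
  exists j d, [/\ last (cv i) p = cv j, d <= size p &
                  (cv (j + d) = cv i \/ cv (i + d) = cv j)].
Proof.
elim/last_ind: p => [|p z IH]; first by move=> _; exists i, 0; rewrite !addn0; split=> //; left.
rewrite rcons_path => /andP [/IH [j [d [Hl Hd Hor]]] Hr].
rewrite last_rcons size_rcons.
case: (cyc_step Hl Hr) => [-> | [j' [-> Hj']]].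
  exists (j + 1).
  case: Hor => H.
    case: d Hd H => [|d] Hd H.
      exists 1; split => //; right; rewrite addn0 in H; exact: cvD.
    exists d; split => //; try lia.
    by left; rewrite -H; congr cv; lia.
  exists d.+1; split => //; try lia.
  by right; rewrite addnS -addn1 (cvD 1 H).
exists j'.
case: Hor => H.
  exists d.+1; split => //; try lia.
  by left; rewrite -H -(cvD d Hj'); congr cv; lia.
case: d Hd H => [|d] Hd H.
  exists 1; split => //; left; rewrite Hj' -H addn0 //.
exists d; split => //; try lia.
right; apply: (@cvK _ _ 1); rewrite Hj' -H; congr cv; lia.
Qed.
End Cyc.

Section Main.
Variable T : finType.
Variables (e : rel T) (c : seq T) (x0 : T).
Hypothesis Hsym : symmetric e.
Hypothesis Hirr : irreflexive e.
Hypothesis Hconn : connected_graph e.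
Hypothesis Hcyc : is_cycle e c.
Hypothesis Hiso : forall u v, u \in c -> v \in c -> dist (cycle_rel c) u v = dist e u v.
Local Notation n := (size c).
Local Notation cv := (cv c x0).
Local Notation dG := (dist e).

Lemma Uc : uniq c. Proof. by case/and3P: Hcyc. Qed.
Lemma Hn3 : 3 <= n. Proof. by case/and3P: Hcyc. Qed.
Lemma Hn : 0 < n. Proof. by have := Hn3; case: n. Qed.

Lemma e_cv m : e (cv m) (cv (m + 1)).
Proof.
case/and3P: Hcyc => _ _ Hc.
by rewrite addn1 -(next_cv x0 Uc Hn); apply: next_cycle => //; apply: cv_in Hn _.
Qed.

Lemma Dlow i o : o < n -> minn o (n - o) <= dG (cv i) (cv (i + o)).
Proof.
move=> Ho.
have Hlt := dist_conn_lt (Hconn (cv i) (cv (i + o))).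
rewrite -Hiso ?(cv_in x0 Hn) // in Hlt *.
have [p [Hs Hp Hl]] := dist_lt_path Hlt.
rewrite -Hs.
have [j [d [Hl' Hd Hor]]] := cyc_walk Uc Hn Hp.
rewrite Hl in Hl'.
apply: leq_trans Hd.
case: Hor => H.
  have H2 : cv (i + (o + d)) = cv (i + 0).
    by rewrite addn0 addnA -H; apply: (cvD Uc Hn).
  move/eqP: H2; rewrite (cvE x0 Uc Hn) eqn_modDl mod0n => /eqP Hm.
  case: (ltnP (o + d) n) => Hod.
    by rewrite modn_small in Hm; lia.
  lia.
have H2 : cv (i + d) = cv (i + o) by rewrite H.
move/eqP: H2; rewrite (cvE x0 Uc Hn) eqn_modDl (modn_small Ho) => /eqP Hm.
have := leq_mod d n; rewrite Hm; lia.
Qed.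

Variable rt : rel T.
Hypothesis Tsub : subrel rt e.
Hypothesis Tsym : symmetric rt.
Hypothesis Tconn : forall x y, connect rt x y.
Hypothesis Tacyc : acyclicb rt.
Variable k : nat.
Hypothesis Hk : forall x y, e x y -> dist rt x y <= k.
Local Notation dT := (dist rt).

Definition rw w := [rel x y | rt x y && (x != w) && (y != w)].
Local Notation conn w := (connect (rw w)).

Lemma L1 w x y : x != w -> ~~ conn w x y -> dT x w + dT w y <= dT x y.
Proof.
move=> Hx Hnc.
have [p [Hs Hp Hl]] := dist_path (Tconn x y).
rewrite -Hs.
case Hw: (w \in p); last first.
  have Hp' : path (rw w) x p.
    apply: (@sub_in_path _ (predC1 w)) Hp.
      by move=> a b Ha Hb Hab; rewrite /= Hab; move: Ha Hb; rewrite !unfold_in /= => -> ->.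
    rewrite /= Hx /=; apply/allP => z Hz /=; apply: contraFN Hw => /eqP <-; done.
  by move: Hnc; rewrite -Hl; case/negP; apply/connectP; exists p.
move: Hp Hl; case/splitPr: Hw => p1 p2 Hp Hl.
rewrite cat_path /= in Hp; case/and3P: Hp => Hp1 He Hp2.
rewrite size_cat /= addnS -addSn.
apply: leq_add.
  rewrite -(size_rcons p1 w); apply: dist_le; first by rewrite rcons_path Hp1.
  by rewrite last_rcons.
by apply: dist_le Hp2 _; rewrite last_cat in Hl.
Qed.

Lemma dG_le_dT x y : dG x y <= dT x y.
Proof. exact: dist_sub Tsub (Tconn x y). Qed.

Lemma dG_sym x y : dG x y = dG y x.
Proof. exact: dist_sym Hsym (Hconn x y). Qed.

Lemma dT_sym x y : dT x y = dT y x.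
Proof. exact: dist_sym Tsym (Tconn x y). Qed.

Definition sep w j := [|| cv j == w, cv (j + 1) == w | ~~ conn w (cv j) (cv (j + 1))].

Lemma nearS w j : sep w j -> exists2 b, b <= 1 & 2 * dG (cv (j + b)) w <= k.
Proof.
case/or3P => [/eqP H | /eqP H | Hn].
- by exists 0 => //; rewrite addn0 H dist0.
- by exists 1 => //; rewrite H dist0.
case Hj: (cv j == w); first by exists 0 => //; rewrite addn0 (eqP Hj) dist0.
have := L1 (negbT Hj) Hn.
have := Hk (e_cv (j)).
case Hj1: (cv (j + 1) == w).
  by exists 1 => //; rewrite (eqP Hj1) dist0.
have H1 := dG_le_dT (cv j) w.
have H2 := dG_le_dT w (cv (j + 1)).
rewrite dG_sym in H2.
move=> Ha Hb.
case: (leqP (dT (cv j) w) (dT w (cv (j + 1)))) => Hc.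
  by exists 0 => //; rewrite addn0; lia.
by exists 1 => //; lia.
Qed.

Lemma pairk w x y : 2 * dG x w <= k -> 2 * dG y w <= k -> dG x y <= k.
Proof.
move=> Hx Hy; apply: leq_trans (dist_tri (Hconn x w) (Hconn w y)) _.
rewrite (dG_sym w y); lia.
Qed.

Definition K w a := [set v | (v \in c) && (v != w) && conn w a v].
Definition heavy w a := n < 2 * #|K w a|.

Lemma run w b L : 0 < L -> L < n -> (forall m, m < L -> ~~ sep w (b + m)) ->
  L < #|K w (cv b)|.
Proof.
move=> HL0 HLn Hm.
pose s := [seq cv (b + m) | m <- iota 0 L.+1].
have Us : uniq s.
  rewrite map_inj_in_uniq ?iota_uniq // => m1 m2; rewrite !mem_iota !add0n => /andP[_ H1] /andP[_ H2].
  move/eqP; rewrite (cvE x0 Uc Hn) eqn_modDl !modn_small; last 2 first.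
  - by apply: leq_trans H2 _.
  - by apply: leq_trans H1 _.
  by move/eqP.
have Hconn_m : forall m, m <= L -> conn w (cv b) (cv (b + m)).
  elim=> [|m IH] HmL; first by rewrite addn0 connect0.
  apply: connect_trans (IH (ltnW HmL)) _.
  have := Hm m HmL; rewrite /sep !negb_or => /and3P [_ _]; by rewrite negbK (_ : b + m.+1 = b + m + 1) //; lia.
have Hne : forall m, m <= L -> cv (b + m) != w.
  move=> m HmL; case: (ltnP m L) => H.
    by have := Hm m H; rewrite /sep !negb_or => /and3P [].
  have Em : m = (L.-1) + 1 by lia.
  have HL1 : L.-1 < L by lia.
  have := Hm L.-1 HL1; rewrite /sep !negb_or => /and3P [_ + _].
  by rewrite (_ : b + L.-1 + 1 = b + m) //; lia.
have Hsub : {subset s <= K w (cv b)}.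
  move=> v /mapP [m]; rewrite mem_iota add0n => /andP[_ HmL] ->.
  by rewrite inE (cv_in x0 Hn) Hne ?Hconn_m.
have Hs : s \subset K w (cv b) by apply/subsetP.
have := subset_leq_card Hs.
by have /card_uniqP -> := Us; rewrite size_map size_iota.
Qed.

Hypothesis Hk2 : 2 <= k.
Hypothesis H3k : 3 * k + 1 <= n.

Lemma Hheavy w : exists a, heavy w a.
Proof.
case: (boolP [exists m : 'I_n.-1, sep w m]) => [/existsP [m0 Hs0] | Hns]; last first.
  exists (cv 0); rewrite /heavy.
  have := @run w 0 n.-1; rewrite /=.
  have Hn3 := Hn3.
  have H1 : 0 < n.-1 by lia.
  have H2 : n.-1 < n by lia.
  have H3 : forall m, m < n.-1 -> ~~ sep w (0 + m).
    by move=> m Hm; move/existsPn: Hns => /(_ (Ordinal Hm)).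
  move=> /(_ H1 H2 H3); lia.
have [b0 Hb0 Hd0] := nearS Hs0.
set p0 := m0 + b0 in Hd0.
pose inO o := 2 * dG (cv (p0 + o)) w <= k.
have inO0 : inO 0 by rewrite /inO addn0.
have Odich : forall o, o < n -> inO o -> (o <= k) || (n - k <= o).
  move=> o Ho HO; have := Dlow p0 Ho.
  have := pairk inO0 HO; rewrite addn0 => H1 H2.
  have : minn o (n - o) <= k by apply: leq_trans H2 H1.
  lia.
have Ocross : forall o1 o2, o1 < n -> inO o1 -> n - k <= o1 -> inO o2 -> o2 <= k ->
    n - o1 + o2 <= k.
  move=> o1 o2 Ho1 HO1 Hk1 HO2 Hk2'.
  have Hlt : o1 - o2 < n by lia.
  have := Dlow (p0 + o2) Hlt.
  rewrite (_ : p0 + o2 + (o1 - o2) = p0 + o1); last by lia.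
  have := pairk HO2 HO1 => H1 H2.
  have : minn (o1 - o2) (n - (o1 - o2)) <= k by apply: leq_trans H2 H1.
  lia.
pose hi := \max_(o < n | inO o && (o <= k)) o.
pose lo := \max_(o < n | inO o && (n - k <= o)) (n - o).
have Hhik : hi <= k by apply/bigmax_leqP => o /andP [].
have Hhi : forall o1 : 'I_n, inO o1 && (n - k <= o1) -> hi + (n - o1) <= k.
  move=> o1 /andP [HO1 Hk1].
  have : hi <= k - (n - o1).
    apply/bigmax_leqP => o2 /andP [HO2 Hk2'].
    have := Ocross o1 o2 (ltn_ord o1) HO1 Hk1 HO2 Hk2'; lia.
  lia.
have Hlo : hi + lo <= k.
  have : lo <= k - hi.
    apply/bigmax_leqP => o1 Ho1; have := Hhi o1 Ho1; lia.
  lia.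
exists (cv (p0 + hi + 1)); rewrite /heavy.
have H1 : 0 < n - lo - hi - 2 by lia.
have H2 : n - lo - hi - 2 < n by lia.
have H3 : forall m, m < n - lo - hi - 2 -> ~~ sep w (p0 + hi + 1 + m).
  move=> m Hm; apply/negP => Hsm.
  have [bb Hbb Hdb] := nearS Hsm.
  have Ho' : hi + 1 + m + bb < n by lia.
  have HO' : inO (hi + 1 + m + bb).
    by rewrite /inO (_ : p0 + (hi + 1 + m + bb) = p0 + hi + 1 + m + bb) //; lia.
  case/orP: (Odich _ Ho' HO') => Hc.
    have := @leq_bigmax_cond _ (fun o : 'I_n => inO o && (o <= k)) (fun o : 'I_n => nat_of_ord o) (Ordinal Ho').
    rewrite /= HO' Hc => /(_ erefl); rewrite -/hi; lia.
  have := @leq_bigmax_cond _ (fun o : 'I_n => inO o && (n - k <= o)) (fun o : 'I_n => n - o) (Ordinal Ho').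
  rewrite /= HO' Hc => /(_ erefl); rewrite -/lo; lia.
have := run H1 H2 H3; lia.
Qed.

Lemma rw_sym w : symmetric (rw w).
Proof. by move=> x y; rewrite /= Tsym andbAC. Qed.

Lemma conn_symw w x y : conn w x y = conn w y x.
Proof. exact: (sym_connect_sym (@rw_sym w)). Qed.

Lemma conn_from_w w v : conn w w v -> v = w.
Proof.
case/connectP => [[|z p] //= /andP [H _] ->].
by move: H; rewrite eqxx andbF.
Qed.

Lemma conn_to_w w x : conn w x w -> x = w.
Proof. by rewrite conn_symw => /conn_from_w. Qed.

Lemma Avoid w w' x y : conn w' x y -> ~~ conn w' x w -> conn w x y.
Proof.
case/connectP => p Hp -> Hnw; apply/connectP; exists p => //.
have Hall : all [pred z | conn w' x z] (x :: p).
  by apply/allP => z Hz; apply: path_connect Hp _ Hz.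
apply: (@sub_in_path _ [pred z | conn w' x z]) Hall Hp.
move=> a b /= Ha Hb /andP [/andP [Hab _] _]; rewrite /= Hab /=.
have Ha' : conn w' x a := Ha; have Hb' : conn w' x b := Hb.
apply/andP; split; apply/eqP => E; move: Hnw; rewrite -E; [rewrite Ha' | rewrite Hb'] =>//.
Qed.

Lemma neighbor w a : a != w -> exists2 w', rt w' w & conn w a w'.
Proof.
move=> Ha; case/connectP: (Tconn a w) => p Hp Hl.
elim: p a Ha Hp Hl => [|y p IH] a Ha /=; first by move=> _ E; rewrite E eqxx in Ha.
case/andP => Hay Hp Hl.
case Hy: (y == w); first by exists a; rewrite -?(eqP Hy) // connect0.
have [w' H1 H2] := IH y (negbT Hy) Hp Hl.
exists w' => //; apply: connect_trans H2; apply: connect1; by rewrite /= Hay Ha Hy.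
Qed.

Lemma rt_irr x : rt x x = false.
Proof. by apply/negP => /Tsub; rewrite Hirr. Qed.

Definition rcut u v := [rel x y | rt x y && ~~ (((x == u) && (y == v)) || ((x == v) && (y == u)))].

Lemma bridge u v : rt u v -> connect (rcut u v) u v -> False.
Proof.
move=> Huv /connectP [p Hp Hl].
have Huv' : u != v by apply/eqP => E; move: Huv; rewrite E rt_irr.
move: Hl; case/shortenP: Hp => p' Hp' Hu _ Hl.
have Hp2 : path rt u p' by apply: sub_path Hp' => x y /andP [].
case: p' Hp' Hu Hl Hp2 => [|y [|z q]] Hp' Hu Hl Hp2.
- by rewrite /= in Hl; rewrite Hl eqxx in Huv'.
- rewrite /= in Hl; move: Hp'; rewrite /= Hl. by rewrite !eqxx andbF.
set s := u :: y :: z :: q.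
have Hcy : is_cycle rt s.
  rewrite /is_cycle Hu.
  have -> : cycle rt s = path rt u (rcons [:: y, z & q] u) by [].
  by rewrite rcons_path Hp2 -Hl Tsym Huv.
have Hsz : size s < #|T|.+1.
  by rewrite ltnS; have /card_uniqP <- := Hu; apply: max_card.
move/forallP: Tacyc => /(_ (Ordinal Hsz)) /forallP /(_ (in_tuple s)).
by rewrite Hcy.
Qed.

Lemma TL w w' b : rt w' w -> conn w w' b -> conn w' b w -> False.
Proof.
move=> Hww H1 H2; apply: (bridge Hww).
have Hs1 : forall u, subrel (rw u) (connect (rcut w' w)) -> subrel (conn u) (connect (rcut w' w)).
  by move=> u Hs; apply: connect_sub.
apply: connect_trans (Hs1 w _ _ _ H1) (Hs1 w' _ _ _ H2).
  move=> x y /andP [/andP [Hxy Hx] Hy]; apply: connect1; rewrite /= Hxy /=.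
  by apply/negP => /orP [/andP [_ /eqP E] | /andP [/eqP E _]]; [rewrite E eqxx in Hy | rewrite E eqxx in Hx].
move=> x y /andP [/andP [Hxy Hx] Hy]; apply: connect1; rewrite /= Hxy /=.
by apply/negP => /orP [/andP [/eqP E _] | /andP [_ /eqP E]]; [rewrite E eqxx in Hx | rewrite E eqxx in Hy].
Qed.

Lemma heavy_ne w a : heavy w a -> a != w.
Proof.
rewrite /heavy; apply: contraTneq => ->.
have -> : K w w = set0.
  apply/setP => v; rewrite !inE; apply/negP => /andP [/andP [_ Hv] /conn_from_w E].
  by rewrite E eqxx in Hv.
by rewrite cards0.
Qed.

Lemma cardc : #|[set v | v \in c]| = n.
Proof. by rewrite cardsE; apply/card_uniqP/Uc. Qed.

Lemma inter w a w' a' : heavy w a -> heavy w' a' ->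
  exists b, b \in K w a :&: K w' a'.
Proof.
rewrite /heavy => H1 H2.
have S1 : K w a \subset [set v | v \in c] by apply/subsetP => v; rewrite !inE => /andP [/andP [-> _] _].
have S2 : K w' a' \subset [set v | v \in c] by apply/subsetP => v; rewrite !inE => /andP [/andP [-> _] _].
have S : K w a :|: K w' a' \subset [set v | v \in c] by rewrite subUset S1 S2.
have := subset_leq_card S; rewrite cardc => Hc.
have HUI := cardsUI (K w a) (K w' a').
have : 0 < #|K w a :&: K w' a'|.
  move: HUI Hc H1 H2; set A := #|_ :&: _|; set B := #|_ :|: _|; set C := #|K w a|; set D := #|K w' a'|; lia.
by rewrite card_gt0 => /set0Pn [b Hb]; exists b.
Qed.

Definition comp w a := [set v | conn w a v].

Lemma descent N w a : heavy w a -> #|comp w a| <= N -> False.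
Proof.
elim: N w a => [|N IH] w a Hh.
  by rewrite leqn0 => /eqP /cards0_eq /setP /(_ a); rewrite !inE connect0.
move=> HN.
have Ha := heavy_ne Hh.
have [w' Hww Haw'] := neighbor Ha.
have [a' Hh'] := Hheavy w'.
have [b] := inter Hh Hh'.
rewrite !inE => /andP [/andP [/andP [_ Hbw] Hab] /andP [/andP [_ Hbw'] Ha'b]].
have Hnw : ~~ conn w' a' w.
  apply/negP => Ha'w.
  apply: (@TL w w' b Hww).
    by apply: connect_trans Hab; rewrite conn_symw.
  by apply: connect_trans Ha'w; rewrite conn_symw.
have Haa' : conn w a a'.
  apply: connect_trans Hab _; rewrite conn_symw; exact: Avoid Ha'b Hnw.
have Hsub : comp w' a' \proper comp w a.
  apply/properP; split.
    apply/subsetP => v; rewrite !inE => Hv.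
    exact: connect_trans Haa' (Avoid Hv Hnw).
  exists w'; rewrite !inE //.
  apply/negP => /conn_to_w E; move: Hh'; rewrite E => /heavy_ne; by rewrite eqxx.
apply: (IH w' a' Hh').
by rewrite -ltnS; apply: leq_trans (proper_card Hsub) HN.
Qed.

Lemma contra_main : False.
Proof.
have [a Ha] := Hheavy x0.
exact: (@descent #|comp x0 a| x0 a Ha (leqnn _)).
Qed.
End Main.

Unset Implicit Arguments. Set Strict Implicit. Set Printing Implicit Defensive.

Lemma k1_case (T : finType) (e : rel T) (c : seq T) (rt : rel T) :
  irreflexive e -> is_cycle e c -> (forall x y, connect rt x y) -> acyclicb rt ->
  (forall x y, e x y -> dist rt x y <= 1) -> False.
Proof.
move=> Hirr Hcyc Tconn Tacyc Hk.
have Hsub : subrel e rt.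
  move=> x y Hxy; have := Hk x y Hxy.
  have [p [Hs Hp Hl]] := dist_path (Tconn x y).
  rewrite -Hs; case: p Hs Hp Hl => [|z [|z' q]] //= _.
    by move=> _ E; rewrite E Hirr in Hxy.
  by rewrite andbT => H <-.
have Hc : is_cycle rt c.
  case/and3P: Hcyc => H1 H2 H3; rewrite /is_cycle H1 H2.
  exact: (sub_cycle Hsub H3).
have Hu : uniq c by case/and3P: Hcyc.
have Hsz : size c < #|T|.+1.
  by rewrite ltnS; have /card_uniqP <- := Hu; apply: max_card.
move/forallP: Tacyc => /(_ (Ordinal Hsz)) /forallP /(_ (in_tuple c)).
by rewrite Hc.
Qed.

Theorem mainTheorem2 (T : finType) (e : rel T) (c : seq T) :
  simple_graph e -> connected_graph e ->
  isometric_cycle e c ->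
  (size c + 2) %/ 3 <= stretch e.
Proof.
move=> [Hsym Hirr] Hconn [Hcyc Hiso].
have x0 : T by move: Hcyc; case: (c) => [|y s] //; exact: y.
have Hu : uniq c by case/and3P: Hcyc.
have Hn3 : 3 <= size c by case/and3P: Hcyc.
rewrite /stretch; apply: (big_ind (fun m => (size c + 2) %/ 3 <= m)).
- have : size c <= #|T| by have /card_uniqP <- := Hu; apply: max_card.
  lia.
- by move=> x y Hx Hy; rewrite leq_min Hx Hy.
move=> t /and4P [H1 H2 H3 H4].
set k := \max_(p | e p.1 p.2) _.
have Hk : forall x y, e x y -> dist (rel_of t) x y <= k.
  by move=> x y Hxy; apply: (@leq_bigmax_cond _ (fun p : T * T => e p.1 p.2) (fun p => dist (rel_of t) p.1 p.2) (x, y)).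
have Tsub : subrel (rel_of t) e.
  by move=> x y Hxy; move/forallP: H1 => /(_ (x, y)); rewrite /rel_of in Hxy; rewrite Hxy.
have Tsym : symmetric (rel_of t).
  move=> x y; apply/idP/idP => H.
    by move/forallP: H2 => /(_ (x, y)); rewrite /rel_of in H *; rewrite H.
  by move/forallP: H2 => /(_ (y, x)); rewrite /rel_of in H *; rewrite H.
have Tconn : forall x y, connect (rel_of t) x y.
  by move=> x y; move/forallP: H3 => /(_ x) /forallP /(_ y).
rewrite leqNgt; apply/negP => Hlt.
case: (leqP k 1) => Hk1.
  apply: (@k1_case _ _ _ _ Hirr Hcyc Tconn H4) => x y Hxy; exact: leq_trans (Hk x y Hxy) Hk1.
have H3k : 3 * k + 1 <= size c by lia.
exact: (contra_main x0 Hsym Hirr Hconn Hcyc Hiso Tsub Tsym Tconn H4 Hk Hk1 H3k).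
Qed.
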